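(* Let $\lambda_1,\dots,\lambda_5,p,q$ be arbitrary integers, let $A(x_1,x_2,x_3)$ be the $3\times3$ matrix $[x_{ij}]$ with $x_{11}=x_1,\ x_{12}=x_2,\ x_{13}=x_3$, $x_{21}=-\lambda_3(\lambda_1-\lambda_2-\lambda_3+\lambda_5)x_2-\lambda_3(\lambda_2-\lambda_4)x_3$, $x_{22}=x_1+\lambda_1x_2+\lambda_2x_3$, $x_{23}=\lambda_3x_2+\lambda_3x_3$, $x_{31}=-\lambda_3(\lambda_2-\lambda_4)x_2+(-\lambda_1\lambda_4+\lambda_2^2-\lambda_2\lambda_5+\lambda_3\lambda_4)x_3$, $x_{32}=\lambda_2x_2+\lambda_4x_3$, $x_{33}=x_1+\lambda_3x_2+\lambda_5x_3$, and let $$P(x_1,\dots,x_6)=\begin{bmatrix}A(x_1,x_2,x_3) & A(x_4,x_5,x_6)\\ -qA(x_4,x_5,x_6) & A(x_1,x_2,x_3)+pA(x_4,x_5,x_6)\end{bmatrix}.$$ Then there exist bilinear forms $z_1,\dots,z_6$ in independent variables $x_1,\dots,x_6,y_1,\dots,y_6$, with coefficients integer polynomials in $\lambda_1,\dots,\lambda_5,p,q$, such that $P(x_1,\dots,x_6)P(y_1,\dots,y_6)=P(z_1,\dots,z_6)$; consequently the senary sextic form $f=\det P$ satisfies $f(x_1,\dots,x_6)f(y_1,\dots,y_6)=f(z_1,\dots,z_6)$. *)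

(* Defs.v *)
From HB Require Import structures.
From mathcomp Require Import all_boot all_order all_algebra.
From mathcomp Require Import mpoly.
Set Implicit Arguments. Unset Strict Implicit. Unset Printing Implicit Defensive.
Import GRing.Theory.
Local Open Scope ring_scope.

Definition Amat (R : comRingType) (l1 l2 l3 l4 l5 x1 x2 x3 : R) : 'M[R]_3 :=
  \matrix_(i < 3, j < 3)
    match nat_of_ord i, nat_of_ord j with
    | 0, 0 => x1
    | 0, 1 => x2
    | 0, _ => x3
    | 1, 0 => - l3 * (l1 - l2 - l3 + l5) * x2 - l3 * (l2 - l4) * x3
    | 1, 1 => x1 + l1 * x2 + l2 * x3
    | 1, _ => l3 * x2 + l3 * x3
    | _, 0 => - l3 * (l2 - l4) * x2
              + (- l1 * l4 + l2 ^+ 2 - l2 * l5 + l3 * l4) * x3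
    | _, 1 => l2 * x2 + l4 * x3
    | _, _ => x1 + l3 * x2 + l5 * x3
    end.

(* The 6x6 block matrix P(x1,...,x6); x is indexed by 'I_6 (x 0 = x_1, ...). *)
Definition Pmat (R : comRingType) (l1 l2 l3 l4 l5 p q : R) (x : 'I_6 -> R)
  : 'M[R]_(3 + 3) :=
  let A1 := Amat l1 l2 l3 l4 l5 (x (inord 0)) (x (inord 1)) (x (inord 2)) in
  let A2 := Amat l1 l2 l3 l4 l5 (x (inord 3)) (x (inord 4)) (x (inord 5)) in
  block_mx A1 A2 (- q *: A2) (A1 + p *: A2).

Definition bilin (R : comRingType) (c : 'I_6 -> 'I_6 -> 'I_6 -> R)
  (x y : 'I_6 -> R) : 'I_6 -> R :=
  fun k => \sum_(i < 6) \sum_(j < 6) c k i j * x i * y j.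

Definition params (l1 l2 l3 l4 l5 p q : int) : 'I_7 -> int :=
  fun i => nth 0 [:: l1; l2; l3; l4; l5; p; q] i.

(* Main.v *)
Require Import Defs.
From HB Require Import structures.
From mathcomp Require Import all_boot all_order all_algebra.
From mathcomp Require Import mpoly.
From mathcomp Require Import ring.
Import GRing.Theory.
Local Open Scope ring_scope.

Definition Xp (n : nat) : {mpoly int[7]} := 'X_(inord n).
Definition s1 : {mpoly int[7]} := - Xp 2 * (Xp 0 - Xp 1 - Xp 2 + Xp 4).
Definition t1 : {mpoly int[7]} := - Xp 2 * (Xp 1 - Xp 3).
Definition u1 : {mpoly int[7]} :=
  - Xp 0 * Xp 3 + Xp 1 * Xp 1 - Xp 1 * Xp 4 + Xp 2 * Xp 3.
Definition cc (k i j : nat) : {mpoly int[7]} :=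
  match k, i, j with
  | 0, 0, 0 => 1
  | 0, 1, 1 => s1
  | 0, 1, 2 => t1
  | 0, 2, 1 => t1
  | 0, 2, 2 => u1
  | 1, 0, 1 => 1
  | 1, 1, 0 => 1
  | 1, 1, 1 => Xp 0
  | 1, 1, 2 => Xp 1
  | 1, 2, 1 => Xp 1
  | 1, 2, 2 => Xp 3
  | 2, 0, 2 => 1
  | 2, 2, 0 => 1
  | 2, 1, 1 => Xp 2
  | 2, 1, 2 => Xp 2
  | 2, 2, 1 => Xp 2
  | 2, 2, 2 => Xp 4
  | 0, 3, 3 => (- Xp 6) * (1)
  | 0, 4, 4 => (- Xp 6) * (s1)
  | 0, 4, 5 => (- Xp 6) * (t1)
  | 0, 5, 4 => (- Xp 6) * (t1)
  | 0, 5, 5 => (- Xp 6) * (u1)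
  | 1, 3, 4 => (- Xp 6) * (1)
  | 1, 4, 3 => (- Xp 6) * (1)
  | 1, 4, 4 => (- Xp 6) * (Xp 0)
  | 1, 4, 5 => (- Xp 6) * (Xp 1)
  | 1, 5, 4 => (- Xp 6) * (Xp 1)
  | 1, 5, 5 => (- Xp 6) * (Xp 3)
  | 2, 3, 5 => (- Xp 6) * (1)
  | 2, 5, 3 => (- Xp 6) * (1)
  | 2, 4, 4 => (- Xp 6) * (Xp 2)
  | 2, 4, 5 => (- Xp 6) * (Xp 2)
  | 2, 5, 4 => (- Xp 6) * (Xp 2)
  | 2, 5, 5 => (- Xp 6) * (Xp 4)
  | 3, 0, 3 => 1
  | 3, 1, 4 => s1
  | 3, 1, 5 => t1
  | 3, 2, 4 => t1
  | 3, 2, 5 => u1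
  | 4, 0, 4 => 1
  | 4, 1, 3 => 1
  | 4, 1, 4 => Xp 0
  | 4, 1, 5 => Xp 1
  | 4, 2, 4 => Xp 1
  | 4, 2, 5 => Xp 3
  | 5, 0, 5 => 1
  | 5, 2, 3 => 1
  | 5, 1, 4 => Xp 2
  | 5, 1, 5 => Xp 2
  | 5, 2, 4 => Xp 2
  | 5, 2, 5 => Xp 4
  | 3, 3, 0 => 1
  | 3, 4, 1 => s1
  | 3, 4, 2 => t1
  | 3, 5, 1 => t1
  | 3, 5, 2 => u1
  | 4, 3, 1 => 1
  | 4, 4, 0 => 1
  | 4, 4, 1 => Xp 0
  | 4, 4, 2 => Xp 1
  | 4, 5, 1 => Xp 1
  | 4, 5, 2 => Xp 3
  | 5, 3, 2 => 1
  | 5, 5, 0 => 1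
  | 5, 4, 1 => Xp 2
  | 5, 4, 2 => Xp 2
  | 5, 5, 1 => Xp 2
  | 5, 5, 2 => Xp 4
  | 3, 3, 3 => (Xp 5) * (1)
  | 3, 4, 4 => (Xp 5) * (s1)
  | 3, 4, 5 => (Xp 5) * (t1)
  | 3, 5, 4 => (Xp 5) * (t1)
  | 3, 5, 5 => (Xp 5) * (u1)
  | 4, 3, 4 => (Xp 5) * (1)
  | 4, 4, 3 => (Xp 5) * (1)
  | 4, 4, 4 => (Xp 5) * (Xp 0)
  | 4, 4, 5 => (Xp 5) * (Xp 1)
  | 4, 5, 4 => (Xp 5) * (Xp 1)
  | 4, 5, 5 => (Xp 5) * (Xp 3)
  | 5, 3, 5 => (Xp 5) * (1)
  | 5, 5, 3 => (Xp 5) * (1)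
  | 5, 4, 4 => (Xp 5) * (Xp 2)
  | 5, 4, 5 => (Xp 5) * (Xp 2)
  | 5, 5, 4 => (Xp 5) * (Xp 2)
  | 5, 5, 5 => (Xp 5) * (Xp 4)
  | _, _, _ => 0
  end.

Definition cfin (k i j : 'I_6) : {mpoly int[7]} := cc k i j.

Section G.
Variables (R : comRingType) (v : 'I_7 -> int).
Definition g (m : {mpoly int[7]}) : R := (m.@[v])%:~R.
Lemma gD a b : g (a + b) = g a + g b. Proof. by rewrite /g mevalD intrD. Qed.
Lemma gM a b : g (a * b) = g a * g b. Proof. by rewrite /g mevalM intrM. Qed.
Lemma gN a : g (- a) = - g a. Proof. by rewrite /g mevalN intrN. Qed.
Lemma gB a b : g (a - b) = g a - g b. Proof. by rewrite /g mevalB intrB. Qed.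
Lemma gX2 a : g (a ^+ 2) = g a ^+ 2. Proof. by rewrite !expr2 gM. Qed.
Lemma g1 : g 1 = 1. Proof. by rewrite /g meval1. Qed.
Lemma g0 : g 0 = 0. Proof. by rewrite /g meval0. Qed.
Lemma gXp n : (n < 7)%N -> g (Xp n) = (v (inord n))%:~R.
Proof. by move=> _; rewrite /g /Xp mevalXU. Qed.
End G.

Lemma sum6 (R : nmodType) (F : 'I_6 -> R) :
  \sum_(i < 6) F i = F (inord 0) + F (inord 1) + F (inord 2) + F (inord 3)
     + F (inord 4) + F (inord 5).
Proof.
rewrite !big_ord_recr big_ord0 /= add0r.
by do 6? [congr (_ + _) | congr F; apply/val_inj; rewrite /= inordK].
Qed.

Lemma cfinE a b d : (a < 6)%N -> (b < 6)%N -> (d < 6)%N ->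
  cfin (inord a) (inord b) (inord d) = cc a b d.
Proof. by move=> ha hb hd; rewrite /cfin !inordK. Qed.

Lemma pXp (l1 l2 l3 l4 l5 p q : int) n : (n < 7)%N ->
  (Xp n).@[params l1 l2 l3 l4 l5 p q] = nth 0 [:: l1; l2; l3; l4; l5; p; q] n.
Proof. by move=> hn; rewrite /Xp mevalXU /params inordK. Qed.

Section AL.
Variables (R : comRingType) (l1 l2 l3 l4 l5 : R).
Notation A := (Amat l1 l2 l3 l4 l5).
Definition m1 (a1 a2 a3 b1 b2 b3 : R) : R :=
  a1 * b1 + a2 * b2 * (- l3 * (l1 - l2 - l3 + l5)) + (a2 * b3+a3 * b2) * (- l3 * (l2 - l4))
  + a3 * b3 * (- l1 * l4 + l2 * l2 - l2 * l5 + l3 * l4).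
Definition m2 (a1 a2 a3 b1 b2 b3 : R) : R :=
  a1 * b2 + a2 * b1 + a2 * b2 * l1 + (a2 * b3+a3 * b2) * l2 + a3 * b3 * l4.
Definition m3 (a1 a2 a3 b1 b2 b3 : R) : R :=
  a1 * b3 + a3 * b1 + a2 * b2 * l3 + (a2 * b3+a3 * b2) * l3 + a3 * b3 * l5.

Lemma AmulE (a1 a2 a3 b1 b2 b3 : R) : A a1 a2 a3 *m A b1 b2 b3 =
  A (m1 a1 a2 a3 b1 b2 b3) (m2 a1 a2 a3 b1 b2 b3) (m3 a1 a2 a3 b1 b2 b3).
Proof.
apply/matrixP => i j; rewrite !mxE !big_ord_recr big_ord0 /= !mxE /m1 /m2 /m3.
case: i => [[|[|[|i]]] Hi] //=; case: j => [[|[|[|j]]] Hj] //=; ring.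
Qed.

Lemma Aadd (a1 a2 a3 b1 b2 b3 : R) : A a1 a2 a3 + A b1 b2 b3 = A (a1+b1) (a2+b2) (a3+b3).
Proof.
apply/matrixP => i j; rewrite !mxE.
case: i => [[|[|[|i]]] Hi] //=; case: j => [[|[|[|j]]] Hj] //=; ring.
Qed.

Lemma Ascale (c a1 a2 a3 : R) : c *: A a1 a2 a3 = A (c*a1) (c*a2) (c*a3).
Proof.
apply/matrixP => i j; rewrite !mxE.
case: i => [[|[|[|i]]] Hi] //=; case: j => [[|[|[|j]]] Hj] //=; ring.
Qed.
End AL.

Section B.
Variables (l1 l2 l3 l4 l5 p q : int) (R : comRingType) (x y : 'I_6 -> R).
Let cR := fun k i j => ((cfin k i j).@[params l1 l2 l3 l4 l5 p q])%:~R : R.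
Notation M1 := (@m1 R (l1%:~R) (l2%:~R) (l3%:~R) (l4%:~R) (l5%:~R)).
Notation M2 := (@m2 R (l1%:~R) (l2%:~R) (l4%:~R)).
Notation M3 := (@m3 R (l3%:~R) (l5%:~R)).
Ltac bl := rewrite /bilin /cR !sum6 !cfinE //= /s1 /t1 /u1
  !(mevalD, mevalM, mevalN, mevalB, meval1, meval0) !pXp //=
  !(intrD, intrM, intrN, intrB) /m1 /m2 /m3; ring.

Lemma z0 : bilin cR x y (inord 0) =
  M1 (x (inord 0)) (x (inord 1)) (x (inord 2)) (y (inord 0)) (y (inord 1)) (y (inord 2)) + - q%:~R * M1 (x (inord 3)) (x (inord 4)) (x (inord 5)) (y (inord 3)) (y (inord 4)) (y (inord 5)).
Proof. bl. Qed.

Lemma z1 : bilin cR x y (inord 1) =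
  M2 (x (inord 0)) (x (inord 1)) (x (inord 2)) (y (inord 0)) (y (inord 1)) (y (inord 2)) + - q%:~R * M2 (x (inord 3)) (x (inord 4)) (x (inord 5)) (y (inord 3)) (y (inord 4)) (y (inord 5)).
Proof. bl. Qed.

Lemma z2 : bilin cR x y (inord 2) =
  M3 (x (inord 0)) (x (inord 1)) (x (inord 2)) (y (inord 0)) (y (inord 1)) (y (inord 2)) + - q%:~R * M3 (x (inord 3)) (x (inord 4)) (x (inord 5)) (y (inord 3)) (y (inord 4)) (y (inord 5)).
Proof. bl. Qed.

Lemma z3 : bilin cR x y (inord 3) =
  M1 (x (inord 0)) (x (inord 1)) (x (inord 2)) (y (inord 3)) (y (inord 4)) (y (inord 5)) + (M1 (x (inord 3)) (x (inord 4)) (x (inord 5)) (y (inord 0)) (y (inord 1)) (y (inord 2)) + p%:~R * M1 (x (inord 3)) (x (inord 4)) (x (inord 5)) (y (inord 3)) (y (inord 4)) (y (inord 5))).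
Proof. bl. Qed.

Lemma z4 : bilin cR x y (inord 4) =
  M2 (x (inord 0)) (x (inord 1)) (x (inord 2)) (y (inord 3)) (y (inord 4)) (y (inord 5)) + (M2 (x (inord 3)) (x (inord 4)) (x (inord 5)) (y (inord 0)) (y (inord 1)) (y (inord 2)) + p%:~R * M2 (x (inord 3)) (x (inord 4)) (x (inord 5)) (y (inord 3)) (y (inord 4)) (y (inord 5))).
Proof. bl. Qed.

Lemma z5 : bilin cR x y (inord 5) =
  M3 (x (inord 0)) (x (inord 1)) (x (inord 2)) (y (inord 3)) (y (inord 4)) (y (inord 5)) + (M3 (x (inord 3)) (x (inord 4)) (x (inord 5)) (y (inord 0)) (y (inord 1)) (y (inord 2)) + p%:~R * M3 (x (inord 3)) (x (inord 4)) (x (inord 5)) (y (inord 3)) (y (inord 4)) (y (inord 5))).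
Proof. bl. Qed.

End B.

Theorem mainTheorem8 :
  exists c : 'I_6 -> 'I_6 -> 'I_6 -> {mpoly int[7]},
  forall (l1 l2 l3 l4 l5 p q : int) (R : comRingType) (x y : 'I_6 -> R),
    let cR := fun k i j => ((c k i j).@[params l1 l2 l3 l4 l5 p q])%:~R : R in
    let PP := Pmat (l1%:~R) (l2%:~R) (l3%:~R) (l4%:~R) (l5%:~R) (p%:~R) (q%:~R) in
    PP x *m PP y = PP (bilin cR x y) /\
    \det (PP x) * \det (PP y) = \det (PP (bilin cR x y)).
Proof.
exists cfin => l1 l2 l3 l4 l5 p q R x y cR PP.
have E : PP x *m PP y = PP (bilin cR x y).
  rewrite /PP /Pmat /cR !z0 !z1 !z2 !z3 !z4 !z5 mulmx_block.
  rewrite !mulmxDl !mulmxDr -!scalemxAl -!scalemxAr !AmulE !Ascale !Aadd.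
  by congr block_mx; congr (Amat _ _ _ _ _ _ _ _); ring.
split=> //.
by rewrite -det_mulmx E.
Qed.
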